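(* For all positive integers $n$, \[ \sum_{k=0}^{n} (-1)^k D(n-k,k) = \begin{cases} 0, &\text{if $n$ is odd,} \\ -1, &\text{if $n \equiv 2 \pmod{4}$,} \\ 1, &\text{if $n \equiv 0 \pmod{4}$.} \end{cases} \]
   Context: For non-negative integers $m,n$, the Delannoy number $D(m,n)$ is the number of lattice paths from $(0,0)$ to $(m,n)$ using only steps from $(i,j)$ to $(i+1,j)$, $(i,j+1)$ or $(i+1,j+1)$. *)

(* Defs.v *)
From HB Require Import structures.
From mathcomp Require Import all_boot all_algebra.
Set Implicit Arguments. Unset Strict Implicit. Unset Printing Implicit Defensive.

Inductive step := East | North | Diag.

Definition step_dx (s : step) : nat := match s with East | Diag => 1 | North => 0 end.
Definition step_dy (s : step) : nat := match s with North | Diag => 1 | East => 0 end.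

Definition step_code (s : step) : 'I_3 :=
  match s with East => inord 0 | North => inord 1 | Diag => inord 2 end.
Definition step_decode (i : 'I_3) : step :=
  match val i with 0 => East | 1 => North | _ => Diag end.
Lemma step_codeK : cancel step_code step_decode.
Proof. by case; rewrite /step_decode /= inordK. Qed.
HB.instance Definition _ := Finite.copy step (can_type step_codeK).

Definition ends_at (m n : nat) (p : seq step) : bool :=
  (\sum_(s <- p) step_dx s == m) && (\sum_(s <- p) step_dy s == n).

(* Each step increases i+j by at least 1, so any path to (m,n) has at most
   m+n steps; we count paths of every length l <= m+n. *)
Definition Delannoy (m n : nat) : nat :=
  \sum_(l < (m + n).+1) #|[set t : l.-tuple step | ends_at m n t]|.

(* Main.v *)
Require Import Defs.
From mathcomp Require Import all_boot all_algebra zify ring.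
Set Implicit Arguments. Unset Strict Implicit. Unset Printing Implicit Defensive.

Definition G l m n := \sum_(t : l.-tuple step) (ends_at m n t : nat).

Lemma cardG l m n : #|[set t : l.-tuple step | ends_at m n t]| = G l m n.
Proof.
rewrite /G -sum1_card big_mkcond /=; apply: eq_bigr => t _.
by rewrite inE; case: ends_at.
Qed.

Lemma step_decodeK : cancel step_decode step_code.
Proof.
move=> [[|[|[|i]]] Hi] //; apply: val_inj; rewrite /= inordK //.
Qed.

Lemma sum_step (F : step -> nat) : \sum_(s : step) F s = F East + F North + F Diag.
Proof.
rewrite (reindex step_decode); last by exists step_code => x _; [exact: step_decodeK | exact: step_codeK].
rewrite !big_ord_recl big_ord0 /=; by rewrite addn0 addnA.
Qed.

Lemma sum_tupleS l (F : l.+1.-tuple step -> nat) :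
  \sum_(t : l.+1.-tuple step) F t = \sum_(s : step) \sum_(t : l.-tuple step) F [tuple of s :: t].
Proof.
rewrite pair_big /= (reindex (fun p : step * l.-tuple step => [tuple of p.1 :: p.2])) //.
exists (fun t : l.+1.-tuple step => (thead t, [tuple of behead t])) => [[s t] _|t _] /=.
  by congr (_, _); apply: val_inj.
by rewrite -tuple_eta.
Qed.

Lemma G0 m n : G 0 m n = ((m == 0) && (n == 0)).
Proof.
rewrite /G (eq_bigr (fun _ => (ends_at m n [tuple] : nat))); last by move=> t _; rewrite tuple0.
rewrite sum_nat_const card_tuple expn0 mul1n /ends_at !big_nil /=.
by rewrite (eq_sym 0 m) (eq_sym 0 n); case: (_ && _).
Qed.

Lemma ends_cons m n s (t : seq step) : ends_at m n (s :: t) =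
  (step_dx s + \sum_(x <- t) step_dx x == m) && (step_dy s + \sum_(x <- t) step_dy x == n).
Proof. by rewrite /ends_at !big_cons. Qed.

Lemma GS l m n : G l.+1 m n =
  (if m is m'.+1 then G l m' n else 0) + (if n is n'.+1 then G l m n' else 0) +
  (if m is m'.+1 then if n is n'.+1 then G l m' n' else 0 else 0).
Proof.
rewrite /G sum_tupleS sum_step; congr (_ + _ + _).
- case: m => [|m].
    by apply: big1 => t _; rewrite ends_cons /=.
  by apply: eq_bigr => t _; rewrite ends_cons /= add1n add0n eqSS.
- case: n => [|n].
    by apply: big1 => t _; rewrite ends_cons /= andbF.
  by apply: eq_bigr => t _; rewrite ends_cons /= add1n add0n eqSS.
- case: m => [|m].
    by apply: big1 => t _; rewrite ends_cons /=.
  case: n => [|n].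
    by apply: big1 => t _; rewrite ends_cons /= andbF.
  by apply: eq_bigr => t _; rewrite ends_cons /= !add1n !eqSS.
Qed.

Lemma size_le (t : seq step) : size t <= \sum_(s <- t) step_dx s + \sum_(s <- t) step_dy s.
Proof.
elim: t => [|s t IH]; first by rewrite !big_nil.
rewrite !big_cons /=; case: s => /=; lia.
Qed.

Lemma Gvan l m n : m + n < l -> G l m n = 0.
Proof.
move=> H; apply: big1 => t _; case E: (ends_at m n t) => //.
move/andP: E => [/eqP a /eqP b]; have := size_le t; rewrite a b size_tuple; lia.
Qed.

Lemma DelE m n N : m + n < N -> Delannoy m n = \sum_(l < N) G l m n.
Proof.
move=> H; rewrite /Delannoy; under eq_bigr do rewrite cardG.
rewrite [LHS](big_ord_widen N (fun l => G l m n)) // big_mkcond.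
apply: eq_bigr => i _; case: ifP => // h; rewrite Gvan //; lia.
Qed.

Lemma G0n l n : G l 0 n = (l == n).
Proof.
elim: l n => [|l IH] n; first by rewrite G0 eq_sym.
rewrite GS; case: n => [|n] /=; by rewrite ?IH ?addn0.
Qed.

Lemma Gm0 l m : G l m 0 = (l == m).
Proof.
elim: l m => [|l IH] m; first by rewrite G0 andbT eq_sym.
rewrite GS; case: m => [|m] /=; by rewrite ?IH ?addn0.
Qed.

Lemma D0n n : Delannoy 0 n = 1.
Proof.
rewrite (DelE (N := n.+1)) //; under eq_bigr do rewrite G0n.
rewrite big_ord_recr /= eqxx big1 // => i _; by rewrite ltn_eqF.
Qed.

Lemma Dm0 m : Delannoy m 0 = 1.
Proof.
rewrite (DelE (N := m.+1)) ?addn0 //; under eq_bigr do rewrite Gm0.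
rewrite big_ord_recr /= eqxx big1 // => i _; by rewrite ltn_eqF.
Qed.

Lemma DSS m n : Delannoy m.+1 n.+1 = Delannoy m n.+1 + Delannoy m.+1 n + Delannoy m n.
Proof.
rewrite (DelE (N := (m + n).+3)); last by lia.
rewrite big_ord_recl G0 add0n.
under eq_bigr do rewrite GS.
rewrite !big_split /= (DelE (N := (m + n).+2) (m := m)); last by lia.
rewrite (DelE (N := (m + n).+2) (m := m.+1)); last by lia.
rewrite (DelE (N := (m + n).+2) (m := m) (n := n)) //; lia.
Qed.

Import GRing.Theory.
Local Open Scope ring_scope.
Definition asum (d : nat -> nat -> int) n := \sum_(k < n.+1) (-1) ^+ k * d (n - k)%N k.

Lemma asum_rec d (h0 : forall j, d 0%N j = 1) (h1 : forall i, d i 0%N = 1)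
  (hS : forall i j, d i.+1 j.+1 = d i j.+1 + d i.+1 j + d i j) n :
  asum d n.+2 = - asum d n.
Proof.
have E1 : asum d n.+1 = 1 + \sum_(i < n.+1) (-1) ^+ i.+1 * d (n - i)%N i.+1.
  by rewrite /asum big_ord_recl /= subn0 h1 mulr1.
have E2 : asum d n.+1 = \sum_(i < n.+1) (-1) ^+ i * d (n.+1 - i)%N i + (-1) ^+ n.+1.
  by rewrite /asum big_ord_recr /= subnn h0 mulr1.
rewrite /asum big_ord_recl big_ord_recr /= subn0 subnn h0 h1 !mulr1.
rewrite (eq_bigr (fun i : 'I_n.+1 => (-1) ^+ i.+1 * d (n - i)%N i.+1 +
    - ((-1) ^+ i * d (n.+1 - i)%N i) + - ((-1) ^+ i * d (n - i)%N i))); last first.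
  move=> i _; have Hi : (i <= n)%N by rewrite -ltnS.
  rewrite /bump /= !add1n subSS !(subSn Hi) hS exprS.
  ring.
rewrite !big_split /= !sumrN /bump /= expr0.
have -> : \sum_(i < n.+1) (-1) ^+ i.+1 * d (n - i)%N i.+1 = asum d n.+1 - 1 by rewrite E1; ring.
have -> : \sum_(i < n.+1) (-1) ^+ i * d (n.+1 - i)%N i = asum d n.+1 - (-1) ^+ n.+1 by rewrite E2; ring.
rewrite /asum !exprS; ring.
Qed.

Lemma asum_val d (h0 : forall j, d 0%N j = 1) (h1 : forall i, d i 0%N = 1)
  (hS : forall i j, d i.+1 j.+1 = d i j.+1 + d i.+1 j + d i j) n :
  asum d n = (if odd n then 0 else if (n %% 4 == 2)%N then -1 else 1).
Proof.
have a0 : asum d 0 = 1 by rewrite /asum big_ord1 /= h0 mulr1.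
have a1 : asum d 1 = 0 by rewrite /asum !big_ord_recl big_ord0 /= h0 h1 /bump /=; ring.
elim/ltn_ind: n => n IH.
case: n IH => [|[|[|[|m]]]] IH.
- by rewrite a0.
- by rewrite a1.
- by rewrite asum_rec // a0.
- by rewrite asum_rec // a1 oppr0.
- rewrite asum_rec // asum_rec // opprK IH; last by lia.
  have -> : (m.+4 %% 4 = m %% 4)%N by rewrite -addn4 modnDr.
  by rewrite /= !negbK.
Qed.

Theorem corollary5p2 (n : nat) : (0 < n)%N ->
  \sum_(k < n.+1) (-1) ^+ k * (Delannoy (n - k) k)%:Z =
    (if odd n then 0 else if (n %% 4 == 2)%N then -1 else 1).
Proof.
move=> _.
apply: (asum_val (d := fun i j => (Delannoy i j)%:Z)).
- by move=> j; rewrite D0n.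
- by move=> i; rewrite Dm0.
- by move=> i j; rewrite DSS !PoszD.
Qed.
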